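(* Under the standing assumptions below, suppose $S_1\neq\emptyset$. Then there exists a rank-one idempotent $P\in M_2(\mathbb C)$ such that $\theta(S_1)\subseteq\overline{B}_P(12\delta)\sqcup\overline{B}_{I-P}(12\delta)$ (a disjoint union). Moreover, for $e,f\in S_1$: if $\theta(e),\theta(f)\in\overline B_P(12\delta)$ then $\theta(ef)\in\overline B_P(12\delta)$; if $\theta(e),\theta(f)\in\overline B_{I-P}(12\delta)$ then $\theta(ef)\in\overline B_{I-P}(12\delta)$; if $\theta(e)\in\overline B_P(12\delta)$ and $\theta(f)\in\overline B_{I-P}(12\delta)$ then $ef\in S_0$.
   Context: Standing assumptions: $S$ is a semilattice (commutative semigroup of idempotents), $0\le\delta<0.03$, and $\theta:S\to M_2(\mathbb C)$ satisfies $\|\theta(e)\theta(f)-\theta(ef)\|_{HS}\le\delta$ for all $e,f\in S$, where $\|A\|_{HS}=(\operatorname{tr}(A^*A))^{1/2}$. For $k\in\{0,1,2\}$, $S_k=\{x\in S:\ |\operatorname{tr}\theta(x)-k|<0.95\}$; these sets are pairwise disjoint and cover $S$. $\overline B_A(r)=\{B\in M_2(\mathbb C):\|A-B\|_{HS}\le r\}$. *)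

(* Defs.v *)
(* The complex field is modelled by an arbitrary
   numClosedFieldType C (C itself is such a field; algC is the library instance). *)
From HB Require Import structures.
From mathcomp Require Import all_boot all_order all_algebra.
Set Implicit Arguments. Unset Strict Implicit. Unset Printing Implicit Defensive.
Import Order.TTheory GRing.Theory Num.Theory.
Local Open Scope ring_scope.

Definition hs_norm (C : numClosedFieldType) (A : 'M[C]_2) : C :=
  sqrtC (\tr ((map_mx Num.conj A)^T *m A)).

Definition cball (C : numClosedFieldType) (A : 'M[C]_2) (r : C) (B : 'M[C]_2) : Prop :=
  hs_norm (A - B) <= r.

Definition Sk (C : numClosedFieldType) (S : Type) (theta : S -> 'M[C]_2)
  (k : nat) (x : S) : Prop :=
  `|\tr (theta x) - k%:R| < 95 / 100.

(* Main.v *)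
Require Import Defs.
From HB Require Import structures.
From mathcomp Require Import all_boot all_order all_algebra.
From mathcomp Require Import ring lra.
Set Implicit Arguments. Unset Strict Implicit. Unset Printing Implicit Defensive.
Import Order.TTheory GRing.Theory Num.Theory.
Local Open Scope ring_scope.

Section RS.
Variable C : numClosedFieldType.
Record RC := mkRC { rv : C; rvP : rv \is Num.real }.
HB.instance Definition _ := [isSub for rv].
HB.instance Definition _ := [Choice of RC by <:].
HB.instance Definition _ := [SubChoice_isSubIntegralDomain of RC by <:].
HB.instance Definition _ := [SubIntegralDomain_isSubField of RC by <:].

Lemma rvD (x y : RC) : rv (x + y) = rv x + rv y. Proof. by []. Qed.
Lemma rvM (x y : RC) : rv (x * y) = rv x * rv y. Proof. by []. Qed.
Lemma rvN (x : RC) : rv (- x) = - rv x. Proof. by []. Qed.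
Lemma rv0 : rv (0 : RC) = 0. Proof. by []. Qed.
Lemma rv1 : rv (1 : RC) = 1. Proof. by []. Qed.
Lemma rvV (x : RC) : rv (x^-1) = (rv x)^-1. Proof. by []. Qed.

Definition RCle (x y : RC) := rv x <= rv y.
Definition RClt (x y : RC) := rv x < rv y.
Definition RCnorm (x : RC) : RC := mkRC (normr_real (rv x)).

Fact RCle0_add x y : RCle 0 x -> RCle 0 y -> RCle 0 (x + y).
Proof. by rewrite /RCle rvD rv0; apply: addr_ge0. Qed.
Fact RCle0_mul x y : RCle 0 x -> RCle 0 y -> RCle 0 (x * y).
Proof. by rewrite /RCle rvM rv0; apply: mulr_ge0. Qed.
Fact RCle0_anti x : RCle 0 x -> RCle x 0 -> x = 0.
Proof. rewrite /RCle rv0 => h1 h2; apply: val_inj; apply/eqP; by rewrite eq_le h1 h2. Qed.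
Fact RCsub_ge0 x y : RCle 0 (y - x) = RCle x y.
Proof. by rewrite /RCle rvD rvN rv0 subr_ge0. Qed.
Fact RCle0_total x : RCle 0 x || RCle x 0.
Proof. rewrite /RCle rv0; have := rvP x; rewrite realE; by []. Qed.
Fact RCnormN x : RCnorm (- x) = RCnorm x.
Proof. apply: val_inj; exact: normrN. Qed.
Fact RCge0_norm x : RCle 0 x -> RCnorm x = x.
Proof. by rewrite /RCle rv0 => h; apply: val_inj; rewrite /= ger0_norm. Qed.
Fact RClt_def x y : RClt x y = (y != x) && RCle x y.
Proof. by rewrite /RClt /RCle lt_def. Qed.

HB.instance Definition _ := Num.IntegralDomain_isLeReal.Build RC RCle0_add RCle0_mul RCle0_anti RCsub_ge0 RCle0_total RCnormN RCge0_norm RClt_def.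

Lemma rvle (x y : RC) : (x <= y) = (rv x <= rv y). Proof. by []. Qed.
Lemma rvlt (x y : RC) : (x < y) = (rv x < rv y). Proof. by []. Qed.
Lemma rvn (n : nat) : rv (n%:R : RC) = n%:R.
Proof. elim: n => [//|n IH]; by rewrite !mulrS rvD IH. Qed.
Lemma rvX (x : RC) n : rv (x ^+ n) = rv x ^+ n.
Proof. elim: n => [//|n IH]; by rewrite !exprS rvM IH. Qed.

Lemma test_num : rv (95 / 100 : RC) = 95 / 100.
Proof. by rewrite rvM rvV !rvn. Qed.

Lemma rv_inj (x y : RC) : rv x = rv y -> x = y. Proof. exact: val_inj. Qed.
Definition nr (z : C) : RC := mkRC (normr_real z).
Lemma rv_nr z : rv (nr z) = `|z|. Proof. by []. Qed.
Lemma nr_ge0 z : 0 <= nr z. Proof. rewrite rvle; exact: normr_ge0. Qed.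
Lemma nrM z w : nr (z * w) = nr z * nr w. Proof. apply: val_inj; exact: normrM. Qed.
Lemma nrD z w : nr (z + w) <= nr z + nr w. Proof. rewrite rvle; exact: ler_normD. Qed.
Lemma nrN z : nr (- z) = nr z. Proof. apply: val_inj; exact: normrN. Qed.
Lemma nrB z w : nr (z - w) = nr (w - z). Proof. by rewrite -nrN opprB. Qed.
Lemma nrJ z : nr (z^*) = nr z. Proof. apply: val_inj; exact: norm_conjC. Qed.
Lemma nrn n : nr (n%:R) = n%:R. Proof. apply: val_inj => /=; by rewrite rvn normr_nat. Qed.
Lemma nrV z : nr (z^-1) = (nr z)^-1. Proof. apply: val_inj => /=; by rewrite normfV. Qed.
Lemma nr_sq z : rv (nr z ^+ 2) = z * z^*. Proof. by rewrite rvX rv_nr normCK. Qed.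
Lemma nr_par x y : nr (x + y) ^+ 2 + nr (x - y) ^+ 2 = 2 * nr x ^+ 2 + 2 * nr y ^+ 2.
Proof.
apply: rv_inj; rewrite !rvD !rvM !rv_nr -!expr2 !normCK (rvn 2) rmorphD rmorphB /=. ring.
Qed.
Lemma nrBl z w : nr z - nr w <= nr (z - w).
Proof. rewrite lerBlDr; have := nrD (z - w) w; by rewrite subrK. Qed.

Notation M := 'M[C]_2.
Lemma sum2 (F : 'I_2 -> C) : \sum_i F i = F 0 + F 1.
Proof. rewrite big_ord_recl big_ord1; congr (F _ + F _); exact: val_inj. Qed.
Lemma ord2_cases (i : 'I_2) : i = 0 \/ i = 1.
Proof. case: i => [[|[|i]] Hi]; [left|right|by []]; exact: val_inj. Qed.
Lemma eq_mx2 (A B : M) : A 0 0 = B 0 0 -> A 0 1 = B 0 1 -> A 1 0 = B 1 0 -> A 1 1 = B 1 1 -> A = B.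
Proof.
move=> h00 h01 h10 h11; apply/matrixP => i j.
by case: (ord2_cases i) => ->; case: (ord2_cases j) => ->.
Qed.
Lemma trE (A : M) : \tr A = A 0 0 + A 1 1. Proof. by rewrite /mxtrace sum2. Qed.

Definition nsq (A : M) : RC := nr (A 0 0) ^+ 2 + nr (A 0 1) ^+ 2 + nr (A 1 0) ^+ 2 + nr (A 1 1) ^+ 2.
Lemma nsq_ge0 A : 0 <= nsq A.
Proof. by rewrite /nsq !addr_ge0 // sqr_ge0. Qed.
Lemma hs_trE (A : M) : \tr ((map_mx Num.conj A)^T *m A) = rv (nsq A).
Proof.
rewrite trE !mxE !sum2 !mxE /nsq !rvD !nr_sq. ring.
Qed.
Lemma hs_real (A : M) : hs_norm A \is Num.real.
Proof. rewrite /hs_norm hs_trE; apply: sqrtC_real; have := nsq_ge0 A; by rewrite rvle. Qed.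
Definition hsR (A : M) : RC := mkRC (hs_real A).
Lemma rv_hsR A : rv (hsR A) = hs_norm A. Proof. by []. Qed.
Lemma hsR_ge0 A : 0 <= hsR A.
Proof. rewrite rvle rv_hsR /hs_norm hs_trE sqrtC_ge0; have := nsq_ge0 A; by rewrite rvle. Qed.
Lemma hsR_sq A : hsR A ^+ 2 = nsq A.
Proof. apply: rv_inj; by rewrite rvX rv_hsR /hs_norm hs_trE sqrtCK. Qed.
Lemma sqle (x y : RC) : 0 <= y -> x ^+ 2 <= y ^+ 2 -> x <= y.
Proof. move=> hy hxy. nra. Qed.
Lemma hsR_le A r : 0 <= r -> nsq A <= r ^+ 2 -> hsR A <= r.
Proof. move=> hr h; apply: sqle => //; by rewrite hsR_sq. Qed.
Lemma nsq_le A r : hsR A <= r -> nsq A <= r ^+ 2.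
Proof. move=> h; rewrite -hsR_sq; have := hsR_ge0 A; nra. Qed.

Lemma CS4 (p1 p2 p3 p4 q1 q2 q3 q4 a b : RC) : 0 <= a -> 0 <= b ->
  a ^+ 2 = p1^+2 + p2^+2 + p3^+2 + p4^+2 -> b ^+ 2 = q1^+2 + q2^+2 + q3^+2 + q4^+2 ->
  p1 * q1 + p2 * q2 + p3 * q3 + p4 * q4 <= a * b.
Proof.
move=> ha hb ea eb.
have L : (p1 * q1 + p2 * q2 + p3 * q3 + p4 * q4) ^+ 2 <= (a * b) ^+ 2.
  rewrite exprMn ea eb.
  have -> : (p1^+2 + p2^+2 + p3^+2 + p4^+2) * (q1^+2 + q2^+2 + q3^+2 + q4^+2) =
    (p1 * q1 + p2 * q2 + p3 * q3 + p4 * q4) ^+ 2 +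
    ((p1*q2 - p2*q1)^+2 + (p1*q3 - p3*q1)^+2 + (p1*q4 - p4*q1)^+2 +
     (p2*q3 - p3*q2)^+2 + (p2*q4 - p4*q2)^+2 + (p3*q4 - p4*q3)^+2) by ring.
  rewrite lerDl; by rewrite !addr_ge0 // sqr_ge0.
by apply: sqle => //; rewrite mulr_ge0.
Qed.

Lemma nrD2 z w : nr (z + w) ^+ 2 <= (nr z + nr w) ^+ 2.
Proof. have := nrD z w; have := nr_ge0 (z + w); nra. Qed.

Lemma hsR_D A B : hsR (A + B) <= hsR A + hsR B.
Proof.
apply: hsR_le; first by rewrite addr_ge0 ?hsR_ge0.
rewrite /nsq !mxE.
have h1 := nrD2 (A 0 0) (B 0 0); have h2 := nrD2 (A 0 1) (B 0 1).
have h3 := nrD2 (A 1 0) (B 1 0); have h4 := nrD2 (A 1 1) (B 1 1).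
have cs := CS4 (hsR_ge0 A) (hsR_ge0 B) (hsR_sq A) (hsR_sq B).
rewrite /nsq in cs.
have ha := hsR_sq A; have hb := hsR_sq B; rewrite /nsq in ha hb.
nra.
Qed.
Lemma hsR_N A : hsR (- A) = hsR A.
Proof.
apply: le_anti; apply/andP; split; apply: hsR_le; rewrite ?hsR_ge0 // ?hsR_sq /nsq !mxE !nrN //.
Qed.
Lemma hsR_B A B : hsR (A - B) = hsR (B - A).
Proof. by rewrite -hsR_N opprB. Qed.
Lemma hsR_Bt A B : hsR (A - B) <= hsR A + hsR B.
Proof. by rewrite -(hsR_N B); apply: hsR_D. Qed.
Lemma nrX2 z : nr (z ^+ 2) = nr z ^+ 2. Proof. by rewrite !expr2 nrM. Qed.
Lemma nr2 : nr 2 = 2. Proof. exact: (nrn 2). Qed.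
Lemma nr_half z : nr (z / 2) = nr z / 2. Proof. by rewrite nrM nrV nr2. Qed.

Definition mm (A : M) : RC := nr (A 0 0 - A 1 1) ^+ 2 / 2 + nr (A 0 1) ^+ 2 + nr (A 1 0) ^+ 2.
Definition nn (A : M) : C := ((A 0 0 - A 1 1) / 2) ^+ 2 + A 0 1 * A 1 0.
Definition wA (A : M) : C := (\tr A) ^+ 2 / 4 - \tr A / 2 + nn A.

Lemma mm_ge0 A : 0 <= mm A.
Proof. by rewrite /mm !addr_ge0 ?divr_ge0 ?sqr_ge0. Qed.

Lemma F1 A : nsq A = nr (\tr A) ^+ 2 / 2 + mm A.
Proof.
rewrite /nsq /mm trE; have := nr_par (A 0 0) (A 1 1).
set p := nr (_ + _) ^+ 2; set q := nr (_ - _) ^+ 2; set a := nr (A 0 0) ^+ 2; set d := nr (A 1 1) ^+ 2. move=> h. have -> : p = 2 * a + 2 * d - q by rewrite -h; ring. by field.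
Qed.

Lemma F2 A : 2 * nr (nn A) <= mm A.
Proof.
rewrite /nn /mm; have := nrD (((A 0 0 - A 1 1) / 2) ^+ 2) (A 0 1 * A 1 0).
rewrite nrX2 nr_half nrM.
set N := nr (_ + _); set x := nr (A 0 0 - A 1 1); set b := nr (A 0 1); set c := nr (A 1 0).
move=> h. have hbc : 0 <= (b - c) ^+ 2 by apply: sqr_ge0.
have e : x ^+ 2 / 2 + b ^+ 2 + c ^+ 2 - 2 * ((x / 2) ^+ 2 + b * c) = (b - c) ^+ 2 by field.
rewrite -subr_ge0; apply: le_trans hbc _; rewrite -e lerD2l lerN2; nra.
Qed.

Lemma F3 A : nsq (A *m A - A) = nr (\tr A - 1) ^+ 2 * mm A + 2 * nr (wA A) ^+ 2.
Proof.
rewrite F1.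
have -> : \tr (A *m A - A) = 2 * wA A.
  rewrite /wA /nn !trE !mxE !sum2 ?mxE. by field.
rewrite nrM nr2 /mm !mxE !sum2 ?mxE.
have -> : A 0 0 * A 0 0 + A 0 1 * A 1 0 - A 0 0 - (A 1 0 * A 0 1 + A 1 1 * A 1 1 - A 1 1)
   = (\tr A - 1) * (A 0 0 - A 1 1) by rewrite trE; ring.
have -> : A 0 0 * A 0 1 + A 0 1 * A 1 1 - A 0 1 = (\tr A - 1) * A 0 1 by rewrite trE; ring.
have -> : A 1 0 * A 0 0 + A 1 1 * A 1 0 - A 1 0 = (\tr A - 1) * A 1 0 by rewrite trE; ring.
rewrite !nrM. by field.
Qed.
End RS.


Section R.
Variable R : realFieldType.
Implicit Types s m v w X e : R.

Lemma sq_mono (a b : R) : 0 <= a -> a <= b -> a ^+ 2 <= b ^+ 2.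
Proof. move=> *; nra. Qed.
Lemma sq_rev (a b : R) : 0 <= b -> a ^+ 2 <= b ^+ 2 -> a <= b.
Proof. move=> *; nra. Qed.
Lemma pm_le (a b c : R) : 0 <= c -> a <= b -> a * c <= b * c.
Proof. move=> *; nra. Qed.
Lemma pm_lel (a b c : R) : 0 <= c -> a <= b -> c * a <= c * b.
Proof. move=> *; nra. Qed.

Lemma w2le s m w e : 0 <= m -> s ^+ 2 * m + 2 * w ^+ 2 <= e ^+ 2 -> 2 * w ^+ 2 <= e ^+ 2.
Proof. move=> hm h; have : 0 <= s ^+ 2 * m by rewrite mulr_ge0 ?sqr_ge0. clear -h; lra. Qed.
Lemma smle s m w e : 0 <= w -> s ^+ 2 * m + 2 * w ^+ 2 <= e ^+ 2 -> s ^+ 2 * m <= e ^+ 2.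
Proof. move=> hw h; have : 0 <= w ^+ 2 by rewrite sqr_ge0. clear -h; lra. Qed.

Lemma om_bound w e : 0 <= w -> 0 <= e -> 2 * w ^+ 2 <= e ^+ 2 -> w <= 7072/10000 * e.
Proof.
move=> hw he h; apply: sq_rev; first by clear -he; lra.
rewrite exprMn. have : (1/2 : R) <= (7072/10000) ^+ 2 by rewrite expr2; lra.
move=> hc; have := pm_le (sqr_ge0 e) hc. clear -h; lra.
Qed.

Lemma QNF s m v w X e : 0 <= s -> 0 <= m -> 0 <= v -> 0 <= w -> 0 <= e ->
  s ^+ 2 * m + 2 * w ^+ 2 <= e ^+ 2 -> 2 * v <= m -> X <= 4 * (v + w) -> s ^+ 2 - 1 <= X ->
  e <= 12/100 -> s < 18/10.
Proof.
move=> hs hm hv hw he h1 h2 h3 h4 he3; rewrite ltNge; apply/negP => hs18.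
have hw0 := w2le hm h1. have hsm := smle hw h1.
have he2 : e ^+ 2 <= (12/100) ^+ 2 by apply: sq_mono.
have hw2 : w <= 85/1000 by apply: sq_rev; [clear; lra | move: he2; rewrite !expr2; clear -hw0; lra].
have hs2 : (18/10) ^+ 2 <= s ^+ 2 by apply: sq_mono => //; clear; lra.
have hma : (18/10) ^+ 2 * m <= s ^+ 2 * m by apply: pm_le.
move: hs2 hma he2; rewrite !expr2 => hs2 hma he2.
clear -hma hsm he2 hw2 h2 h3 h4 hs2 hv; lra.
Qed.

Lemma QS1 s m v w X e : 0 <= s -> 0 <= m -> 0 <= v -> 0 <= w -> 0 <= e ->
  s ^+ 2 * m + 2 * w ^+ 2 <= e ^+ 2 -> 2 * v <= m -> X <= 4 * (v + w) -> 1 - s ^+ 2 <= X ->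
  e <= 3/100 -> s < 95/100 -> s <= 3/2 * e.
Proof.
move=> hs hm hv hw he h1 h2 h3 h4 he3 hs95.
have hw0 := w2le hm h1. have hsm := smle hw h1.
have hw2 : w <= 7072/10000 * e by apply: om_bound.
have he2 : e ^+ 2 <= 9/10000 by have := sq_mono he he3; rewrite expr2 => h; clear -h; lra.
have hm0 : m >= (1 - s ^+ 2) / 2 - 2 * w by clear -h2 h3 h4; lra.
have hs2 : s ^+ 2 <= 9025/10000 by have := sq_mono hs (ltW hs95); rewrite [X in _ <= X]expr2 => h; clear -h; lra.
have hma : m >= 6/1000 by clear -hm0 hw2 he3 hs2; lra.
have hsa : s ^+ 2 * (6/1000) <= s ^+ 2 * m by apply: pm_lel; rewrite ?sqr_ge0.
have hsb : s ^+ 2 <= 15/100 by clear -hsa hsm he2; lra.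
have hmb : m >= 38/100 by clear -hm0 hw2 he3 hsb; lra.
have hsc : s ^+ 2 * (38/100) <= s ^+ 2 * m by apply: pm_lel; rewrite ?sqr_ge0.
have hsd : s ^+ 2 <= 3/1000 by clear -hsc hsm he2; lra.
have hmc : m >= 4/9 by clear -hm0 hw2 he3 hsd; lra.
have hse : s ^+ 2 * (4/9) <= s ^+ 2 * m by apply: pm_lel; rewrite ?sqr_ge0.
apply: sq_rev; first by clear -he; lra.
rewrite exprMn. have -> : ((3/2 : R)) ^+ 2 = 9/4 by rewrite expr2; clear; lra.
clear -hse hsm; lra.
Qed.

Lemma QT s m v w X e p q : 0 <= s -> 0 <= m -> 0 <= v -> 0 <= w -> 0 <= e -> 0 <= p -> 0 <= q ->
  s ^+ 2 * m + 2 * w ^+ 2 <= e ^+ 2 -> 2 * v <= m -> X <= 4 * (v + w) -> p * q = X -> 2 <= p + q ->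
  e <= 3/100 -> 95/100 <= s -> p <= 2 * e \/ q <= 2 * e.
Proof.
move=> hs hm hv hw he hp hq h1 h2 h3 hpq hpq2 he3 hs95.
have hw0 := w2le hm h1. have hsm := smle hw h1.
have hw2 : w <= 7072/10000 * e by apply: om_bound.
have h0 : (0 : R) <= 95/100 by clear; lra.
have hs2 : 9025/10000 <= s ^+ 2.
  have := sq_mono h0 hs95. have -> : (95/100 : R) ^+ 2 = 9025/10000 by rewrite expr2; clear; lra. done.
have hma : 9025/10000 * m <= s ^+ 2 * m by apply: pm_le.
have hee : e ^+ 2 <= 3/100 * e by rewrite expr2; apply: pm_le.
have hv2 : v <= 2/100 * e by clear -hma hsm hee h2 he; lra.
have hX : X <= 291/100 * e by clear -h3 hv2 hw2 he; lra.
have hX2 : X <= 874/10000 by clear -hX he3 he; lra.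
have gen : forall a b : R, 0 <= a -> 0 <= b -> a <= b -> 2 <= a + b -> a * b = X -> a <= 2 * e.
  move=> a b ha hb hab hab2 habX.
  have hb1 : 1 <= b by clear -hab hab2; lra.
  have hab1 : a * 1 <= a * b by apply: pm_lel.
  have ha1 : a <= 874/10000 by clear -hab1 habX hX2; lra.
  have hb2 : 19126/10000 <= b by clear -ha1 hab2; lra.
  have hab3 : a * (19126/10000) <= a * b by apply: pm_lel.
  clear -hab3 habX hX he; lra.
case: (leP p q) => hle.
- left; exact: gen hpq2 hpq.
- right; apply: (gen q p) => //; [exact: ltW | by rewrite addrC | by rewrite mulrC].
Qed.

Lemma QZ s m w e p t : 0 <= s -> 0 <= m -> 0 <= w -> 0 <= p ->
  s ^+ 2 * m + 2 * w ^+ 2 <= e ^+ 2 -> 1 - p <= s -> p <= t -> t < 1 -> (1 - t) ^+ 2 * m <= e ^+ 2.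
Proof.
move=> hs hm hw hp h1 h2 h3 h4; have hsm := smle hw h1.
have : (1 - t) ^+ 2 <= s ^+ 2 by apply: sq_mono; clear -h2 h3 h4; lra.
move=> hh; have := pm_le hm hh; clear -hsm; lra.
Qed.
Lemma Zgen p m d a b K L : 0 <= d -> 0 <= p -> p <= a * d -> 0 <= m -> L * m <= (b * d) ^+ 2 -> 0 < L ->
  a ^+ 2 / 2 + b ^+ 2 / L <= K ^+ 2 -> p ^+ 2 / 2 + m <= (K * d) ^+ 2.
Proof.
move=> hd hp hpa hm hL hL0 hK.
have h1 : p ^+ 2 <= (a * d) ^+ 2 by apply: sq_mono.
have h2 : m <= (b * d) ^+ 2 / L by rewrite ler_pdivlMr // mulrC.
have h3 : p ^+ 2 / 2 + m <= (a ^+ 2 / 2 + b ^+ 2 / L) * d ^+ 2.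
  have -> : (a ^+ 2 / 2 + b ^+ 2 / L) * d ^+ 2 = (a * d) ^+ 2 / 2 + (b * d) ^+ 2 / L.
    by rewrite !exprMn; field; rewrite lt0r_neq0.
  clear -h1 h2; lra.
apply: le_trans h3 _; rewrite exprMn; apply: pm_le => //; exact: sqr_ge0.
Qed.

Lemma QPnum s m w e g : 0 <= s -> 0 <= m -> 0 <= w -> 0 <= e -> 0 <= g ->
  s ^+ 2 * m + 2 * w ^+ 2 <= e ^+ 2 -> (1 - s ^+ 2) / 2 - 2 * w <= m ->
  g * m <= 2 * (w + s ^+ 2 / 4) -> e <= 3/100 -> s <= 3/2 * e ->
  s ^+ 2 / 2 + g ^+ 2 * m <= (218/100 * e) ^+ 2.
Proof.
move=> hs hm hw he hg h1 hm0 hg2 he3 hse.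
have hw0 := w2le hm h1. have hsm := smle hw h1.
have hw2 : w <= 7072/10000 * e by apply: om_bound.
have hs2 : s ^+ 2 <= (3/2 * e) ^+ 2 by apply: sq_mono.
rewrite exprMn in hs2.
have e94 : (3/2 : R) ^+ 2 = 9/4 by rewrite expr2; clear; lra.
rewrite e94 in hs2.
have he2 : e ^+ 2 <= 9/10000 by have := sq_mono he he3; rewrite [X in _ <= X]expr2 => h; clear -h; lra.
have hs3 : s ^+ 2 <= 21/10000 by clear -hs2 he2; lra.
have hm2 : 45/100 <= m by clear -hm0 hs3 hw2 he3 he; lra.
set E := e ^+ 2 in hw0 hsm hs2 he2 h1 *.
have hE : 0 <= E by exact: sqr_ge0.
set U := 2 * w + 9/8 * E.
have hgU : g * m <= U by rewrite /U; clear -hg2 hs2; lra.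
have hU : (g * m) ^+ 2 <= U ^+ 2 by apply: sq_mono => //; rewrite mulr_ge0.
have eU : U ^+ 2 = 4 * w ^+ 2 + 9/2 * (w * E) + 81/64 * (E * E) by rewrite /U; field.
have ewE : w * E <= 213/10000 * E.
  have := pm_le hE hw2. have : e * E <= 3/100 * E by apply: pm_le.
  move=> h h2; clear -h h2 he hE; lra.
have eEE : E * E <= E * (9/10000) by apply: pm_lel.
have eEm : E * (4989/10000 - 2 * w) <= E * m.
  apply: pm_lel => //. clear -hm0 hs3; lra.
have eEw : E * w <= 213/10000 * E by rewrite mulrC.
have key0 : s ^+ 2 * m / 2 + U ^+ 2 <= 475/100 * (E * m).
  rewrite eU. clear -hsm h1 ewE eEE eEm eEw hw0 hE; lra.
have k2 : (475/100 : R) <= (218/100) ^+ 2 by rewrite expr2; clear; lra.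
have k3 : 0 <= E * m by rewrite mulr_ge0.
have key : s ^+ 2 * m / 2 + U ^+ 2 <= (218/100) ^+ 2 * E * m.
  have := pm_le k3 k2. rewrite -mulrA. clear -key0; lra.
have hm0' : 0 < m by clear -hm2; lra.
rewrite exprMn -/E -(ler_pM2r hm0').
have -> : (s ^+ 2 / 2 + g ^+ 2 * m) * m = s ^+ 2 * m / 2 + (g * m) ^+ 2 by ring.
clear -key hU; lra.
Qed.
End R.


Section S.
Variable C : numClosedFieldType.
Local Notation M := 'M[C]_2.
Local Notation RC := (RC C).

Definition sg (A : M) : RC := nr (\tr A - 1).
Definition nu (A : M) : RC := nr (nn A).
Definition om (A : M) : RC := nr (wA A).

Lemma nr4 : nr (4 : C) = 4. Proof. exact: (nrn _ 4). Qed.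

Lemma NI1 (A : M) e : hsR (A *m A - A) <= e -> sg A ^+ 2 * mm A + 2 * om A ^+ 2 <= e ^+ 2.
Proof. by move=> h; rewrite /sg /om -F3; apply: nsq_le. Qed.
Lemma NI2 (A : M) : 2 * nu A <= mm A. Proof. exact: F2. Qed.
Lemma NI3 (A : M) : nr ((\tr A - 1) ^+ 2 - 1) <= 4 * (nu A + om A).
Proof.
have -> : (\tr A - 1) ^+ 2 - 1 = 4 * (wA A - nn A) by rewrite /wA; field.
rewrite nrM nr4; apply: pm_lel; first by clear; lra.
apply: le_trans (nrD _ _) _; rewrite nrN /nu /om; clear; lra.
Qed.
Lemma NI4 (A : M) : 1 - sg A ^+ 2 <= nr ((\tr A - 1) ^+ 2 - 1) /\ sg A ^+ 2 - 1 <= nr ((\tr A - 1) ^+ 2 - 1).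
Proof.
rewrite /sg -nrX2; split.
- by rewrite nrB; have := nrBl 1 ((\tr A - 1) ^+ 2); rewrite (nrn _ 1).
- by have := nrBl ((\tr A - 1) ^+ 2) 1; rewrite (nrn _ 1).
Qed.
Lemma NI5 (A : M) : nr (\tr A) * nr (\tr A - 2) = nr ((\tr A - 1) ^+ 2 - 1).
Proof. by rewrite -nrM; congr nr; ring. Qed.
Lemma NI6 (A : M) : 2 <= nr (\tr A) + nr (\tr A - 2).
Proof.
have := nrD (\tr A) (- (\tr A - 2)); rewrite nrN.
have -> : \tr A + - (\tr A - 2) = 2 by ring.
by rewrite nr2.
Qed.
Lemma NI7 (A : M) : 1 - nr (\tr A) <= sg A.
Proof.
have := nrD (\tr A - 1) (- \tr A); rewrite nrN.
have -> : \tr A - 1 + - \tr A = - 1 by ring.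
rewrite nrN (nrn _ 1) /sg => h. clear -h; lra.
Qed.
Lemma NI8 (A : M) : nr (nn A - 1/4) <= om A + sg A ^+ 2 / 4.
Proof.
have -> : nn A - 1/4 = wA A + - ((\tr A - 1) ^+ 2 / 4) by rewrite /wA; field.
apply: le_trans (nrD _ _) _; rewrite nrN nrM nrV nr4 nrX2 /om /sg. lra.
Qed.

Lemma nu_ge0 A : 0 <= nu A. Proof. exact: nr_ge0. Qed.
Lemma om_ge0 A : 0 <= om A. Proof. exact: nr_ge0. Qed.
Lemma sg_ge0 A : 0 <= sg A. Proof. exact: nr_ge0. Qed.

Lemma nS1 (A : M) e : hsR (A *m A - A) <= e -> 0 <= e -> e <= 3/100 -> sg A < 95/100 -> sg A <= 3/2 * e.
Proof.
move=> h he he3 hs.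
have [h4 _] := NI4 A.
exact: (QS1 (sg_ge0 A) (mm_ge0 A) (nu_ge0 A) (om_ge0 A) he (NI1 h) (NI2 A) (NI3 A) h4 he3 hs).
Qed.
Lemma nNF (A : M) e : hsR (A *m A - A) <= e -> 0 <= e -> e <= 12/100 -> sg A < 18/10.
Proof.
move=> h he he3.
have [_ h5] := NI4 A.
exact: (QNF (sg_ge0 A) (mm_ge0 A) (nu_ge0 A) (om_ge0 A) he (NI1 h) (NI2 A) (NI3 A) h5 he3).
Qed.
Lemma nT (A : M) e : hsR (A *m A - A) <= e -> 0 <= e -> e <= 3/100 -> 95/100 <= sg A ->
  nr (\tr A) <= 2 * e \/ nr (\tr A - 2) <= 2 * e.
Proof.
move=> h he he3 hs.
exact: (QT (sg_ge0 A) (mm_ge0 A) (nu_ge0 A) (om_ge0 A) he (nr_ge0 _) (nr_ge0 _) (NI1 h) (NI2 A) (NI3 A) (NI5 A) (NI6 A) he3 hs).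
Qed.
Lemma nZ (A : M) e t : hsR (A *m A - A) <= e -> nr (\tr A) <= t -> t < 1 -> (1 - t) ^+ 2 * mm A <= e ^+ 2.
Proof.
move=> h ht ht1.
exact: (QZ (sg_ge0 A) (mm_ge0 A) (om_ge0 A) (nr_ge0 _) (NI1 h) (NI7 A) ht ht1).
Qed.

Lemma Zinst (A : M) (d a b K L : RC) : 0 <= d -> d <= 3/100 -> hsR (A *m A - A) <= b * d ->
  nr (\tr A) <= a * d -> 0 <= a -> 0 < L -> L <= (1 - a * d) ^+ 2 -> a * d < 1 -> 0 <= b -> 0 <= K ->
  a ^+ 2 / 2 + b ^+ 2 / L <= K ^+ 2 -> hsR A <= K * d.
Proof.
move=> hd hd3 h ht ha hL hL2 had hb hK hnum.
have hz := nZ h ht had.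
apply: hsR_le; first by rewrite mulr_ge0.
rewrite F1; apply: (Zgen (L := L) hd (nr_ge0 _) ht (mm_ge0 A) _ hL hnum).
apply: le_trans hz; apply: pm_le; [exact: mm_ge0 | exact: hL2].
Qed.

Lemma Z1 (A : M) (d : RC) : 0 <= d -> d <= 3/100 -> hsR (A *m A - A) <= 4 * d ->
  nr (\tr A) <= 3 * d -> hsR A <= 491/100 * d.
Proof.
move=> hd hd3 h ht; apply: (Zinst (a := 3) (b := 4) (K := 491/100) (L := 82/100)) => //; try (clear -hd hd3; lra).
all: try (rewrite !expr2; clear; lra).
have hx : (91/100 : RC) <= 1 - 3 * d by clear -hd3; lra.
  have h0 : (0 : RC) <= 91/100 by clear; lra.
  have := sq_mono h0 hx. have -> : (91/100 : RC) ^+ 2 = 8281/10000 by rewrite expr2; clear; lra.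
  move=> hh; apply: le_trans _ hh; clear; lra.
Qed.
Lemma Z2 (A : M) (d : RC) : 0 <= d -> d <= 3/100 -> hsR (A *m A - A) <= 1 * d ->
  nr (\tr A) <= 2 * d -> hsR A <= 18/10 * d.
Proof.
move=> hd hd3 h ht; apply: (Zinst (a := 2) (b := 1) (K := 18/10) (L := 88/100)) => //; try (clear -hd hd3; lra).
all: try (rewrite !expr2; clear; lra).
have hx : (94/100 : RC) <= 1 - 2 * d by clear -hd3; lra.
  have h0 : (0 : RC) <= 94/100 by clear; lra.
  have := sq_mono h0 hx. have -> : (94/100 : RC) ^+ 2 = 8836/10000 by rewrite expr2; clear; lra.
  move=> hh; apply: le_trans _ hh; clear; lra.
Qed.
Lemma Z3 (A : M) (d : RC) : 0 <= d -> d <= 3/100 -> hsR (A *m A - A) <= 76/10 * d ->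
  nr (\tr A) <= 3 * d -> hsR A <= 87/10 * d.
Proof.
move=> hd hd3 h ht; apply: (Zinst (a := 3) (b := 76/10) (K := 87/10) (L := 82/100)) => //; try (clear -hd hd3; lra).
all: try (rewrite !expr2; clear; lra).
have hx : (91/100 : RC) <= 1 - 3 * d by clear -hd3; lra.
  have h0 : (0 : RC) <= 91/100 by clear; lra.
  have := sq_mono h0 hx. have -> : (91/100 : RC) ^+ 2 = 8281/10000 by rewrite expr2; clear; lra.
  move=> hh; apply: le_trans _ hh; clear; lra.
Qed.
End S.


Section S.
Variable C : numClosedFieldType.
Local Notation M := 'M[C]_2.
Local Notation RC := (RC C).

Definition mk2 (a b c d : C) : M :=
  \matrix_(i, j) if i == 0 then (if j == 0 then a else b) else (if j == 0 then c else d).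
Lemma o10 : ((1 : 'I_2) == 0) = false. Proof. by []. Qed.
Lemma o01 : ((0 : 'I_2) == 1) = false. Proof. by []. Qed.

Definition goodP (P : M) := exists k1 k2 k3 : C,
  P = mk2 (1/2 + k1) k2 k3 (1/2 - k1) /\ k1 ^+ 2 + k2 * k3 = 1/4.

Lemma lin_eq (x y z : C) : x - y = z -> z = 0 -> x = y.
Proof. by move=> h hz; apply/eqP; rewrite -subr_eq0 h hz. Qed.

Lemma goodP_idem P : goodP P -> P *m P = P.
Proof.
move=> [k1 [k2 [k3 [-> hk]]]].
apply: eq_mx2; rewrite !mxE !sum2 !mxE ?o10 ?o01 ?eqxx /=.
- apply: (lin_eq (z := k1 ^+ 2 + k2 * k3 - 1/4)); [by field | by rewrite hk subrr].
- by field.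
- by field.
- apply: (lin_eq (z := k1 ^+ 2 + k2 * k3 - 1/4)); [by field | by rewrite hk subrr].
Qed.

Lemma goodP_compl P : goodP P -> goodP (1%:M - P).
Proof.
move=> [k1 [k2 [k3 [-> hk]]]]; exists (- k1), (- k2), (- k3); split; last first.
  by rewrite sqrrN mulrNN.
apply: eq_mx2; rewrite !mxE ?o10 ?o01 ?eqxx /=; by field.
Qed.

Lemma goodP_far P X (a b : RC) : goodP P -> hsR (X - P) <= a -> hsR (X - (1%:M - P)) <= b -> 2 <= (a + b) ^+ 2.
Proof.
move=> hP ha hb.
have ht := hsR_Bt (X - (1%:M - P)) (X - P).
have hs : 2 <= nsq (X - (1%:M - P) - (X - P)).
  move: hP => [k1 [k2 [k3 [-> hk]]]].
  rewrite /nsq !mxE ?o10 ?o01 ?eqxx /=.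
  have -> : X 0 0 - (1 - (1 / 2 + k1)) - (X 0 0 - (1 / 2 + k1)) = 2 * k1 by field.
  have -> : X 0 1 - (0 - k2) - (X 0 1 - k2) = 2 * k2 by ring.
  have -> : X 1 0 - (0 - k3) - (X 1 0 - k3) = 2 * k3 by ring.
  have -> : X 1 1 - (1 - (1 / 2 - k1)) - (X 1 1 - (1 / 2 - k1)) = - (2 * k1) by field.
  rewrite nrN !nrM nr2.
  have hq := nrD (k1 ^+ 2) (k2 * k3); rewrite hk nrX2 nrM nrM nrV nr4 (nrn _ 1) in hq.
  move: (sqr_ge0 (nr k2 - nr k3)) => hsq. clear -hq hsq; lra.
have hsq := hsR_sq (X - (1%:M - P) - (X - P)).
have h0 := hsR_ge0 (X - (1%:M - P) - (X - P)).
have hab : hsR (X - (1%:M - P) - (X - P)) <= a + b by clear -ht ha hb; lra.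
have := sq_mono h0 hab. rewrite hsq. clear -hs; lra.
Qed.

Lemma goodP_rank P : goodP P -> \rank P = 1%N.
Proof.
move=> hP; have hI := goodP_idem hP.
move: hP => [k1 [k2 [k3 [eP hk]]]].
have htr : P 0 0 + P 1 1 = 1 by rewrite eP !mxE ?o10 ?o01 ?eqxx /=; field.
have hr := rank_leq_row P.
have hnz : \rank P != 0%N.
  rewrite mxrank_eq0; apply/eqP => h0.
  move: htr; rewrite h0 !mxE addr0 => h.
  by move/eqP: h; rewrite eq_sym oner_eq0.
have hn2 : \rank P != 2%N.
  apply/negP => h2.
  have hu : P \in unitmx by rewrite -row_full_unit /row_full (eqP h2).
  have h1 : P = 1%:M.
    have := congr1 (mulmx (invmx P)) hI. by rewrite mulmxA mulVmx // mul1mx.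
  move: htr; rewrite h1 !mxE ?eqxx /= => h.
  move: h; rewrite ?mulr1n => h. have : (1 : C) + 1 - 1 = 1 - 1 by rewrite h. rewrite addrK subrr => h0.
  by move/eqP: h0; rewrite oner_eq0.
move: hr hnz hn2; case: (\rank P) => [|[|[|n]]] //.
Qed.
Lemma Re_real_id (x : C) : x \is Num.real -> 'Re x = x.
Proof. by move/Creal_ReP. Qed.

Lemma exP (A : M) (e : RC) : hsR (A *m A - A) <= e -> 0 <= e -> e <= 3/100 -> sg A < 95/100 ->
  exists P, goodP P /\ hsR (A - P) <= 218/100 * e.
Proof.
move=> hA he he3 hs95.
have hs := nS1 hA he he3 hs95.
have h1 := NI1 hA. have h2 := NI2 A. have h3 := NI3 A. have [h4 _] := NI4 A.
have hm0 : (1 - sg A ^+ 2) / 2 - 2 * om A <= mm A by clear -h2 h3 h4; lra.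
have hw0 := w2le (mm_ge0 A) h1.
have hw2 := om_bound (om_ge0 A) he hw0.
have hs2 : sg A ^+ 2 <= (3/2 * e) ^+ 2 by apply: sq_mono => //; exact: sg_ge0.
have he2 : e ^+ 2 <= 9/10000 by have := sq_mono he he3; rewrite [X in _ <= X]expr2 => h; clear -h; lra.
rewrite exprMn in hs2.
have e94 : (3/2 : RC) ^+ 2 = 9/4 by rewrite expr2; clear; lra.
rewrite e94 in hs2.
have hm45 : 45/100 <= mm A by clear -hm0 hs2 he2 hw2 he3 he; lra.
pose al := (A 0 0 - A 1 1) / 2.
pose n := nn A.
pose mC := rv (mm A).
have emC : mC = 2 * (al * al^*) + A 0 1 * (A 0 1)^* + A 1 0 * (A 1 0)^*.
  rewrite /mC /mm !rvD rvM rvV (rvn _ 2) !nr_sq /al fmorph_div rmorphB /= (conjC_nat _ 2).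
  by field.
have emCr : mC \is Num.real by exact: rvP.
have en : n = al ^+ 2 + A 0 1 * A 1 0 by [].
have enc : n^* = al^* ^+ 2 + (A 0 1)^* * (A 1 0)^*.
  by rewrite en rmorphD rmorphM rmorphXn.
pose z := mC ^+ 2 - 4 * n^* * (n - 1/4).
pose r := sqrtC z.
pose r' := if 0 <= 'Re r then r else - r.
have hr2 : r' ^+ 2 = z by rewrite /r'; case: ifP => _; rewrite ?sqrrN sqrtCK.
have hRe : 0 <= 'Re r'.
  rewrite /r'; case: ifP => // h.
  rewrite raddfN /= oppr_ge0.
  move/negbT: h; rewrite (real_leNgt (real0 _) (Creal_Re r)) negbK => /ltW //.
pose Dn := mC + r'.
have hDn : mC <= `|Dn|.
  apply: le_trans (leif_Re_Creal Dn).1.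
  rewrite /Dn raddfD /= (Re_real_id emCr) lerDl //.
have hDnR : mm A <= nr Dn by rewrite rvle.
have hDn0 : Dn != 0.
  apply/negP => /eqP h0. move: hDnR; rewrite h0 => hh.
  have : nr (0 : C) = 0 by apply: rv_inj; rewrite /= normr0.
  move=> e0; rewrite e0 in hh; clear -hh hm45; lra.
pose g := 2 * (1/4 - n) / Dn.
have hq : n^* * g ^+ 2 + mC * g + (n - 1/4) = 0.
  have -> : n^* * g ^+ 2 + mC * g + (n - 1/4) = (n - 1/4) * (4 * n^* * (n - 1/4) - mC ^+ 2 + r' ^+ 2) / Dn ^+ 2.
    by rewrite /g /Dn; field; rewrite -/Dn.
  by rewrite hr2 /z; apply/eqP; rewrite mulf_eq0; apply/orP; left; rewrite mulf_eq0; apply/orP; right; apply/eqP; ring.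
pose k1 := al + g * al^*.
pose k2 := A 0 1 + g * (A 1 0)^*.
pose k3 := A 1 0 + g * (A 0 1)^*.
have hk : k1 ^+ 2 + k2 * k3 = 1/4.
  apply: (lin_eq (z := n^* * g ^+ 2 + mC * g + (n - 1/4))); last exact: hq.
  by rewrite enc emC en /k1 /k2 /k3; ring.
pose P := mk2 (1/2 + k1) k2 k3 (1/2 - k1).
exists P; split; first by exists k1, k2, k3.
have eal : al^* = (A 0 0 - A 1 1)^* / 2 by rewrite /al fmorph_div /= (conjC_nat _ 2).
have htr : \tr (A - P) = \tr A - 1.
  rewrite !trE /P !mxE ?o10 ?o01 ?eqxx /=; by field.
have hmm : mm (A - P) = nr g ^+ 2 * mm A.
  rewrite /mm /P !mxE ?o10 ?o01 ?eqxx /=.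
  have -> : A 0 0 - (1 / 2 + k1) - (A 1 1 - (1 / 2 - k1)) = - (g * (A 0 0 - A 1 1)^*).
    by rewrite /k1 eal /al; field.
  have -> : A 0 1 - k2 = - (g * (A 1 0)^*) by rewrite /k2; ring.
  have -> : A 1 0 - k3 = - (g * (A 0 1)^*) by rewrite /k3; ring.
  rewrite !nrN !nrM !nrJ. by field.
have hgD : nr g * nr Dn = 2 * nr (n - 1/4).
  rewrite -nrM.
  have -> : g * Dn = - 2 * (n - 1/4) by rewrite /g; field.
  by rewrite nrM nrN nr2.
have hg8 := NI8 A.
have hgm : nr g * mm A <= 2 * (om A + sg A ^+ 2 / 4).
  apply: le_trans (pm_lel (nr_ge0 g) hDnR) _.
  rewrite hgD. rewrite -/n in hg8. clear -hg8; lra.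
have hnum := QPnum (sg_ge0 A) (mm_ge0 A) (om_ge0 A) he (nr_ge0 g) h1 hm0 hgm he3 hs.
apply: hsR_le; first by clear -he; lra.
by rewrite F1 htr hmm -/(sg A).
Qed.
End S.


Section Main.
Variable C : numClosedFieldType.
Local Notation M := 'M[C]_2.
Local Notation RC := (RC C).
Variables (S : Type) (mul : S -> S -> S).
Hypothesis mulA : forall x y z, mul x (mul y z) = mul (mul x y) z.
Hypothesis mulC : forall x y, mul x y = mul y x.
Hypothesis mulI : forall x, mul x x = x.
Variable delta : C.
Hypothesis hd0 : 0 <= delta.
Hypothesis hd1 : delta < 3 / 100.
Variable theta : S -> M.
Hypothesis htheta : forall e f : S, hs_norm (theta e *m theta f - theta (mul e f)) <= delta.

Local Notation A := theta.
Definition dR : RC := mkRC (ger0_real hd0).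
Lemma dR0 : 0 <= dR. Proof. by rewrite rvle. Qed.
Lemma rv_num (a b : nat) : rv (a%:R / b%:R : RC) = a%:R / b%:R.
Proof. by rewrite rvM rvV !rvn. Qed.
Lemma dR3 : dR <= 3/100.
Proof. rewrite rvle rv_num; exact: ltW. Qed.

Lemma hsR3 (X Y Z : M) : hsR (X + Y + Z) <= hsR X + hsR Y + hsR Z.
Proof. apply: le_trans (hsR_D _ _) _; rewrite lerD2r; exact: hsR_D. Qed.
Lemma hsR4 (X Y Z W : M) : hsR (X - Y - Z + W) <= hsR X + hsR Y + hsR Z + hsR W.
Proof.
apply: le_trans (hsR_D _ _) _; rewrite lerD2r.
apply: le_trans (hsR_Bt _ _) _; rewrite lerD2r; exact: hsR_Bt.
Qed.
Lemma hsR5 (X Y Z W V : M) : hsR (X + Y + Z + W + V) <= hsR X + hsR Y + hsR Z + hsR W + hsR V.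
Proof.
apply: le_trans (hsR_D _ _) _; rewrite lerD2r.
apply: le_trans (hsR_D _ _) _; rewrite lerD2r; exact: hsR3.
Qed.

Lemma F_prod u v : hsR (A u *m A v - A (mul u v)) <= dR.
Proof. rewrite rvle; exact: htheta. Qed.
Lemma F_idem u : hsR (A u *m A u - A u) <= dR.
Proof. by have := F_prod u u; rewrite mulI. Qed.

Lemma F_D u v : mul u v = v -> hsR ((A u - A v) *m (A u - A v) - (A u - A v)) <= 4 * dR.
Proof.
move=> huv.
have -> : (A u - A v) *m (A u - A v) - (A u - A v) =
  (A u *m A u - A u) - (A u *m A v - A v) - (A v *m A u - A v) + (A v *m A v - A v).
  by apply: eq_mx2; rewrite !mxE !sum2 !mxE; ring.
apply: le_trans (hsR4 _ _ _ _) _.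
have h1 := F_idem u. have h2 := F_prod u v. have h3 := F_prod v u. have h4 := F_idem v.
rewrite huv in h2; rewrite mulC huv in h3. lra.
Qed.

Lemma F_E u v : hsR ((1%:M - A u - A v) *m (1%:M - A u - A v) - (1%:M - A u - A v)) <= 4 * dR + 2 * hsR (A (mul u v)).
Proof.
set W := A (mul u v).
have -> : (1%:M - A u - A v) *m (1%:M - A u - A v) - (1%:M - A u - A v) =
  (A u *m A u - A u) + (A v *m A v - A v) + (A u *m A v - W) + (A v *m A u - W) + (W + W).
  apply: eq_mx2; rewrite !mxE !sum2 !mxE ?o10 ?o01 ?eqxx /=; ring.
apply: le_trans (hsR5 _ _ _ _ _) _.
have h1 := F_idem u. have h2 := F_prod u v. have h3 := F_prod v u. have h4 := F_idem v.
have h5 := hsR_D W W.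
rewrite mulC -/W in h3. rewrite -/W in h2. lra.
Qed.

Definition S1 u := sg (A u) < 95/100.

Lemma S1_bound u : S1 u -> sg (A u) <= 3/2 * dR.
Proof. move=> h; exact: (nS1 (F_idem u) dR0 dR3 h). Qed.

Lemma trich u : S1 u \/ nr (\tr (A u)) <= 2 * dR \/ nr (\tr (A u) - 2) <= 2 * dR.
Proof.
case: (ltP (sg (A u)) (95/100)) => h; [by left | right].
exact: (nT (F_idem u) dR0 dR3 h).
Qed.

Lemma trB (X Y : M) : \tr (X - Y) = \tr X - \tr Y.
Proof. rewrite !trE !mxE; ring. Qed.

Lemma near u v : S1 u -> S1 v -> mul u v = v -> hsR (A u - A v) <= 491/100 * dR.
Proof.
move=> hu hv huv; apply: Z1 dR0 dR3 (F_D huv) _.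
have -> : \tr (A u - A v) = (\tr (A u) - 1) + - (\tr (A v) - 1) by rewrite trB; ring.
apply: le_trans (nrD _ _) _; rewrite nrN.
have := S1_bound hu; have := S1_bound hv; rewrite /sg => h1 h2; lra.
Qed.

Lemma nrBt (a b : C) : nr (a - b) <= nr a + nr b.
Proof. by have := nrD a (- b); rewrite nrN. Qed.

Lemma far u v : S1 u -> nr (\tr (A v) - 2) <= 2 * dR -> mul u v = v -> False.
Proof.
move=> hu hv huv.
have h4 : 4 * dR <= 12/100 by have := dR3; lra.
have h40 : 0 <= 4 * dR by have := dR0; lra.
have hN := nNF (F_D huv) h40 h4.
have hb := S1_bound hu.
have h2a := nrBt (\tr (A u - A v) - 1) (\tr (A u) - 1).
have h2b := nrD ((\tr (A u - A v) - 1) - (\tr (A u) - 1)) (\tr (A v) - 2).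
have e' : (\tr (A u - A v) - 1) - (\tr (A u) - 1) + (\tr (A v) - 2) = - 2 by rewrite trB; ring.
rewrite e' nrN nr2 in h2b. move: hN hb; rewrite /sg => hN hb.
have := dR3; lra.
Qed.
Lemma small v : nr (\tr (A v)) <= 2 * dR -> hsR (A v) <= 18/10 * dR.
Proof. move=> h; apply: Z2 dR0 dR3 _ h; rewrite mul1r; exact: F_idem. Qed.

Lemma Eclose u v : S1 u -> S1 v -> nr (\tr (A (mul u v))) <= 2 * dR -> hsR (1%:M - A u - A v) <= 87/10 * dR.
Proof.
move=> hu hv hw; apply: Z3 dR0 dR3 _ _.
- apply: le_trans (F_E u v) _; have := small hw; lra.
- have -> : \tr (1%:M - A u - A v) = - ((\tr (A u) - 1) + (\tr (A v) - 1)).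
    rewrite !trE !mxE ?eqxx /= ?mulr1n; ring.
  rewrite nrN; apply: le_trans (nrD _ _) _.
  have := S1_bound hu; have := S1_bound hv; rewrite /sg => h1 h2; lra.
Qed.

Definition B (Q X : M) := hsR (X - Q) <= 12 * dR.

Lemma farnum (Q X : M) (a b : RC) : goodP Q -> hsR (X - Q) <= a -> hsR (X - (1%:M - Q)) <= b -> a + b <= 33 * dR -> False.
Proof.
move=> hQ ha hb hab.
have h := goodP_far hQ ha hb.
have h0 : 0 <= a + b by have := hsR_ge0 (X - Q); have := hsR_ge0 (X - (1%:M - Q)); lra.
have := sq_mono h0 hab. have := dR3; have := dR0. move=> h1 h2 h3.
have h4 : 33 * dR <= 99/100 by lra.
have h5 : 0 <= 33 * dR by lra.
have := sq_mono h5 h4. rewrite expr2. lra.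
Qed.

Lemma split2 (X Y Q : M) : X - Q = (X - Y) + (Y - Q).
Proof. by rewrite addrA subrK. Qed.
Lemma split3 (X Y Z Q : M) : X - Q = (X - Y) + (Y - Z) + (Z - Q).
Proof. by rewrite !addrA !subrK. Qed.
Lemma splitE (X Y Q : M) : Y - (1%:M - Q) = - (1%:M - X - Y) - (X - Q).
Proof. apply: eq_mx2; rewrite !mxE; ring. Qed.

Lemma far_via (Q : M) u g : goodP Q -> S1 u -> S1 g -> mul u g = g -> B Q (A u) -> B (1%:M - Q) (A g) -> False.
Proof.
move=> hQ hu hg hug h1 h2.
have hn := near hu hg hug.
have h3 : hsR (A u - (1%:M - Q)) <= 491/100 * dR + 12 * dR.
  rewrite (split2 _ (A g)); apply: le_trans (hsR_D _ _) _; rewrite /B in h2; lra.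
apply: (farnum hQ h1 h3); have := dR0; lra.
Qed.

Lemma far_E (Q : M) e f : goodP Q -> S1 e -> S1 f -> nr (\tr (A (mul e f))) <= 2 * dR ->
  B Q (A e) -> B Q (A f) -> False.
Proof.
move=> hQ he hf hg h1 h2.
have hE := Eclose he hf hg.
have h3 : hsR (A f - (1%:M - Q)) <= 87/10 * dR + 12 * dR.
  rewrite (splitE (A e)); apply: le_trans (hsR_Bt _ _) _; rewrite hsR_N; rewrite /B in h1; lra.
apply: (farnum hQ h2 h3); have := dR0; lra.
Qed.

Lemma classify x0 P : S1 x0 -> goodP P -> hsR (A x0 - P) <= 218/100 * dR ->
  forall x, S1 x -> B P (A x) \/ B (1%:M - P) (A x).
Proof.
move=> h0 hP hx0 x hx.
set y := mul x x0.
have hxy : mul x y = y by rewrite /y mulA mulI.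
have hx0y : mul x0 y = y by rewrite /y [mul x x0]mulC mulA mulI.
case: (trich y) => [hy | [hy | hy]].
- left; rewrite /B (split3 _ (A y) (A x0)).
  apply: le_trans (hsR3 _ _ _) _.
  have := near hx hy hxy; have := near h0 hy hx0y; rewrite hsR_B => h1 h2. lra.
- right; rewrite /B.
  have hE := Eclose hx h0 hy.
  have -> : A x - (1%:M - P) = - (1%:M - A x - A x0) - (A x0 - P) by apply: eq_mx2; rewrite !mxE; ring.
  apply: le_trans (hsR_Bt _ _) _; rewrite hsR_N; have := dR0; lra.
- by exfalso; apply: (far hx hy hxy).
Qed.

Lemma same (Q : M) : goodP Q -> (forall x, S1 x -> B Q (A x) \/ B (1%:M - Q) (A x)) ->
  forall e f, S1 e -> S1 f -> B Q (A e) -> B Q (A f) -> B Q (A (mul e f)).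
Proof.
move=> hQ hcl e f he hf h1 h2.
set g := mul e f.
have heg : mul e g = g by rewrite /g mulA mulI.
case: (trich g) => [hg | [hg | hg]].
- case: (hcl g hg) => // h3; exfalso; exact: (far_via hQ he hg heg h1 h3).
- by exfalso; apply: (far_E hQ he hf hg h1 h2).
- by exfalso; apply: (far he hg heg).
Qed.

Lemma cross (P : M) : goodP P -> (forall x, S1 x -> B P (A x) \/ B (1%:M - P) (A x)) ->
  forall e f, S1 e -> S1 f -> B P (A e) -> B (1%:M - P) (A f) -> nr (\tr (A (mul e f))) < 95/100.
Proof.
move=> hP hcl e f he hf h1 h2.
set g := mul e f.
have heg : mul e g = g by rewrite /g mulA mulI.
have hfg : mul f g = g by rewrite /g [mul e f]mulC mulA mulI.
have hQ := goodP_compl hP.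
have eQ : 1%:M - (1%:M - P) = P by rewrite opprB addrC subrK.
case: (trich g) => [hg | [hg | hg]].
- case: (hcl g hg) => h3; exfalso.
  + apply: (far_via hQ hf hg hfg h2); by rewrite eQ.
  + exact: (far_via hP he hg heg h1 h3).
- have := dR3; lra.
- by exfalso; apply: (far he hg heg).
Qed.
Lemma cballE (Q X : M) : cball Q (12 * delta) X <-> B Q X.
Proof. by rewrite /cball /B hsR_B rvle rvM (rvn _ 12). Qed.
Lemma SkE1 u : Sk A 1 u <-> S1 u.
Proof. by rewrite /Sk /S1 /sg rvlt rv_num /= mulr1n. Qed.
Lemma SkE0 u : Sk A 0 u <-> nr (\tr (A u)) < 95/100.
Proof. by rewrite /Sk rvlt rv_num /= mulr0n subr0. Qed.

Lemma main (hS1 : exists x, Sk theta 1 x) :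
  exists P : 'M[C]_2,
    [/\ P *m P = P, \rank P = 1%N,
      (forall x, Sk theta 1 x ->
         cball P (12 * delta) (theta x) \/ cball (1%:M - P) (12 * delta) (theta x)),
      (forall A : 'M[C]_2,
         ~ (cball P (12 * delta) A /\ cball (1%:M - P) (12 * delta) A)) &
      (forall e f, Sk theta 1 e -> Sk theta 1 f ->
         [/\ cball P (12 * delta) (theta e) -> cball P (12 * delta) (theta f) ->
               cball P (12 * delta) (theta (mul e f)),
             cball (1%:M - P) (12 * delta) (theta e) ->
             cball (1%:M - P) (12 * delta) (theta f) ->
               cball (1%:M - P) (12 * delta) (theta (mul e f)) &
             cball P (12 * delta) (theta e) ->
             cball (1%:M - P) (12 * delta) (theta f) ->
               Sk theta 0 (mul e f)])].
Proof.
move: hS1 => [x0 /SkE1 hx0].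
have [P [hP hAP]] := exP (F_idem x0) dR0 dR3 hx0.
have hcl := classify hx0 hP hAP.
have hQ := goodP_compl hP.
have eQ : 1%:M - (1%:M - P) = P by rewrite opprB addrC subrK.
have hclQ : forall x, S1 x -> B (1%:M - P) (A x) \/ B (1%:M - (1%:M - P)) (A x).
  move=> x hx; rewrite eQ; case: (hcl x hx); tauto.
exists P; split.
- exact: goodP_idem.
- exact: goodP_rank.
- move=> x /SkE1 hx; rewrite !cballE; exact: hcl.
- move=> X; rewrite !cballE => -[h1 h2].
  apply: (farnum hP h1 h2); have := dR0; lra.
- move=> e f /SkE1 he /SkE1 hf; split; rewrite ?cballE.
  + exact: (same hP hcl he hf).
  + exact: (same hQ hclQ he hf).
  + move=> h1 h2; apply/SkE0; exact: (cross hP hcl he hf h1 h2).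
Qed.
End Main.


Unset Implicit Arguments.
Theorem propositionp (C : numClosedFieldType) (S : Type) (mul : S -> S -> S)
  (mulA : forall x y z, mul x (mul y z) = mul (mul x y) z)
  (mulC : forall x y, mul x y = mul y x)
  (mulI : forall x, mul x x = x)
  (delta : C) (hd0 : 0 <= delta) (hd1 : delta < 3 / 100)
  (theta : S -> 'M[C]_2)
  (htheta : forall e f : S,
     hs_norm (theta e *m theta f - theta (mul e f)) <= delta)
  (hS1 : exists x, Sk theta 1 x) :
  exists P : 'M[C]_2,
    [/\ P *m P = P, \rank P = 1%N,
      (forall x, Sk theta 1 x ->
         cball P (12 * delta) (theta x) \/ cball (1%:M - P) (12 * delta) (theta x)),
      (forall A : 'M[C]_2,
         ~ (cball P (12 * delta) A /\ cball (1%:M - P) (12 * delta) A)) &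
      (forall e f, Sk theta 1 e -> Sk theta 1 f ->
         [/\ cball P (12 * delta) (theta e) -> cball P (12 * delta) (theta f) ->
               cball P (12 * delta) (theta (mul e f)),
             cball (1%:M - P) (12 * delta) (theta e) ->
             cball (1%:M - P) (12 * delta) (theta f) ->
               cball (1%:M - P) (12 * delta) (theta (mul e f)) &
             cball P (12 * delta) (theta e) ->
             cball (1%:M - P) (12 * delta) (theta f) ->
               Sk theta 0 (mul e f)])].
Proof.
exact: (main mulA mulC mulI hd0 hd1 htheta hS1).
Qed.
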